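(* Let $\Sigma=(\mathbb{N}_0,X,U,\mathscr{U},\phi)$ be a control system as in the standing setup (in particular $\mathscr U$ is a compact metrizable space and $\phi$ is continuous), and let $Q\subset X$ be a compact control set with nonempty interior. Then the following are equivalent: (1) $Q$ is equi-invariant in the mean; (2) $Q$ is finitely equi-invariant in the mean; (3) $Q$ has bounded invariance complexity in the mean.
   Context: Standing setup: $(X,d)$ is a metric space, $U$ is a compact metric space, and $F:X\times U\to X$ is a map such that $F_u:=F(\cdot,u)$ is continuous for every $u\in U$. Let $\mathscr U=U^{\mathbb N_0}$ with the product topology. For $\omega=(\omega_0,\omega_1,\dots)\in\mathscr U$, $x\in X$, set $\phi(0,x,\omega)=x$ and $\phi(k,x,\omega)=F_{\omega_{k-1}}\circ\cdots\circ F_{\omega_0}(x)$ for $k\ge1$. It is assumed that $\phi:\mathbb N_0\times X\times\mathscr U\to X$ is continuous. Notation: $\mathbb N=\{1,2,\dots\}$; $B(x,\delta)$ is the open ball; $d(y,Q)=\inf_{q\in Q}d(y,q)$. Control set: $D\subset X$ is a control set if (i) for every $x\in D$ there is $\omega\in\mathscr U$ with $\phi(k,x,\omega)\in D$ for all $k\in\mathbb N_0$; (ii) for every $x\in D$, $D\subset\operatorname{cl}\mathcal O^+(x)$, where $\mathcal O^+(x)=\{\phi(m,x,\omega):m\in\mathbb N_0,\omega\in\mathscr U\}$; (iii) $D$ is maximal with (i) and (ii). Equi-invariance in the mean: $x\in Q$ is a finitely equi-invariant point in the mean of $Q$ if for every $\varepsilon>0$ there exist $\delta>0$ and a finite set $F\subset\mathscr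 U$ such that for every $y\in B(x,\delta)\cap Q$ there is $\omega\in F$ with $\frac1n\sum_{i=0}^{n-1}d(\phi(i,y,\omega),Q)<\varepsilon$ for all $n\in\mathbb N$; it is an equi-invariant point in the mean if this holds with $F$ a singleton. $Q$ is (finitely) equi-invariant in the mean if every point of $Q$ is such a point. Invariance complexity in the mean: $\hat Q^\varepsilon_{n,\omega}=\{x\in Q:\max_{1\le k\le n}\frac1k\sum_{i=0}^{k-1}d(\phi(i,x,\omega),Q)<\varepsilon\}$; $F\subset\mathscr U$ is $(n,\varepsilon,Q)$-spanning in the mean if $Q=\bigcup_{\omega\in F}\hat Q^\varepsilon_{n,\omega}$; $\hat r_{inv}(n,\varepsilon,Q)$ is the minimal cardinality of such $F$; $Q$ has bounded invariance complexity in the mean if for every $\varepsilon>0$ there is $C$ with $\hat r_{inv}(n,\varepsilon,Q)\le C$ for all $n\in\mathbb N$. *)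

(* Defs.v *)
From HB Require Import structures.
From mathcomp Require Import all_boot all_order all_algebra.
From mathcomp Require Import all_classical all_reals.
From mathcomp Require Import ereal.
From Stdlib Require Lists.List.
Set Implicit Arguments. Unset Strict Implicit. Unset Printing Implicit Defensive.
Import Order.TTheory GRing.Theory Num.Theory.
Local Open Scope classical_set_scope.
Local Open Scope ring_scope.

Section Defs.
Variable R : realType.

Definition is_metric (T : Type) (d : T -> T -> R) : Prop :=
  [/\ forall x y, 0 <= d x y,
      forall x y, d x y = 0 <-> x = y,
      forall x y, d x y = d y x
    & forall x y z, d x z <= d x y + d y z].

Definition mball (T : Type) (d : T -> T -> R) (x : T) (r : R) : set T :=
  [set y | d x y < r].

Definition mopen (T : Type) (d : T -> T -> R) (A : set T) : Prop :=
  forall x, A x -> exists2 r : R, 0 < r & mball d x r `<=` A.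

Definition mcompact (T : Type) (d : T -> T -> R) (K : set T) : Prop :=
  forall (I : Type) (V : I -> set T),
    (forall i, mopen d (V i)) -> K `<=` \bigcup_i V i ->
    exists s : seq I, K `<=` [set x | exists2 i, Stdlib.Lists.List.In i s & V i x].

Definition mclosure (T : Type) (d : T -> T -> R) (A : set T) : set T :=
  [set y | forall e : R, 0 < e -> exists2 a, A a & d y a < e].

Definition mcontinuous (T S : Type) (dT : T -> T -> R) (dS : S -> S -> R)
  (f : T -> S) : Prop :=
  forall x (e : R), 0 < e -> exists2 del : R, 0 < del &
    forall y, dT x y < del -> dS (f x) (f y) < e.

Definition dist_set (T : Type) (d : T -> T -> R) (y : T) (Q : set T) : R :=
  inf [set d y q | q in Q].

Definition nonempty_interior (T : Type) (d : T -> T -> R) (Q : set T) : Prop :=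
  exists x, exists2 r : R, 0 < r & mball d x r `<=` Q.

End Defs.

Fixpoint phi (X U : Type) (F : X -> U -> X) (k : nat) (x : X) (w : nat -> U) : X :=
  match k with
  | 0 => x
  | k'.+1 => F (phi F k' x w) (w k')
  end.

Section Defs2.
Variable R : realType.
Variables (X U : Type) (d : X -> X -> R) (dU : U -> U -> R) (F : X -> U -> X).

(* Continuity of phi : N_0 x X x U^{N_0} -> X, with N_0 discrete and U^{N_0}
   carrying the product topology (basic neighbourhoods: finitely many
   coordinates within eta). *)
Definition phi_continuous : Prop :=
  forall k x (w : nat -> U) (e : R), 0 < e ->
    exists del : R, exists N : nat, exists eta : R,
      [/\ 0 < del, 0 < eta &
        forall y (w' : nat -> U), d x y < del ->
          (forall i, (i < N)%N -> dU (w i) (w' i) < eta) ->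
          d (phi F k x w) (phi F k y w') < e].

Definition orbit_plus (x : X) : set X :=
  [set y | exists m w, y = phi F m x w].

Definition control_set_cond (D : set X) : Prop :=
  (forall x, D x -> exists w : nat -> U, forall k, D (phi F k x w)) /\
  (forall x, D x -> D `<=` mclosure d (orbit_plus x)).

Definition control_set (D : set X) : Prop :=
  control_set_cond D /\
  (forall D', control_set_cond D' -> D `<=` D' -> D' = D).

Definition mean_dist (Q : set X) (n : nat) (y : X) (w : nat -> U) : R :=
  (n%:R)^-1 * \sum_(i < n) dist_set d (phi F i y w) Q.

Definition finitely_equi_invariant_point_mean (Q : set X) (x : X) : Prop :=
  Q x /\
  forall e : R, 0 < e -> exists del : R, exists Fs : seq (nat -> U),
    0 < del /\
    forall y, mball d x del y -> Q y ->
      exists2 w, Stdlib.Lists.List.In w Fs & forall n, (0 < n)%N -> mean_dist Q n y w < e.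

Definition equi_invariant_point_mean (Q : set X) (x : X) : Prop :=
  Q x /\
  forall e : R, 0 < e -> exists del : R, exists w : nat -> U,
    0 < del /\
    forall y, mball d x del y -> Q y ->
      forall n, (0 < n)%N -> mean_dist Q n y w < e.

Definition finitely_equi_invariant_mean (Q : set X) : Prop :=
  forall x, Q x -> finitely_equi_invariant_point_mean Q x.

Definition equi_invariant_mean (Q : set X) : Prop :=
  forall x, Q x -> equi_invariant_point_mean Q x.

Definition hatQ (Q : set X) (n : nat) (e : R) (w : nat -> U) : set X :=
  [set x | Q x /\ forall k, (1 <= k <= n)%N -> mean_dist Q k x w < e].

Definition spanning_mean (n : nat) (e : R) (Q : set X) (Fs : seq (nat -> U)) : Prop :=
  Q = [set x | exists2 w, Stdlib.Lists.List.In w Fs & hatQ Q n e w x].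

(* minimal cardinality of an (n,eps,Q)-spanning set in the mean
   (+oo if there is none) *)
Definition r_inv_mean (n : nat) (e : R) (Q : set X) : \bar R :=
  ereal_inf [set ((size Fs)%:R)%:E | Fs in [set Fs | spanning_mean n e Q Fs]].

Definition bounded_inv_complexity_mean (Q : set X) : Prop :=
  forall e : R, 0 < e -> exists C : R,
    forall n, (0 < n)%N -> (r_inv_mean n e Q <= C%:E)%E.

End Defs2.

(* Main.v *)
Require Import Defs.
From HB Require Import structures.
From mathcomp Require Import all_boot all_order all_algebra.
From mathcomp Require Import all_classical all_reals.
From mathcomp Require Import ereal.
From mathcomp Require Import zify.
From Stdlib Require Lists.List.
Import Order.TTheory GRing.Theory Num.Theory.
Local Open Scope classical_set_scope.
Local Open Scope ring_scope.

Set Implicit Arguments. Unset Strict Implicit. Unset Printing Implicit Defensive.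

Section PhiLemmas.
Variables (X U : Type) (F : X -> U -> X).

Definition wcat (m : nat) (w o : nat -> U) : nat -> U :=
  fun i => if (i < m)%N then w i else o (i - m)%N.

Lemma phi_ext k x (w w' : nat -> U) :
  (forall i, (i < k)%N -> w i = w' i) -> phi F k x w = phi F k x w'.
Proof.
elim: k => [//|k IH] H /=.
rewrite IH; last by move=> i Hi; apply: H; apply: ltnW.
by rewrite H.
Qed.

Lemma phi_add j m x (w : nat -> U) :
  phi F (j + m) x w = phi F j (phi F m x w) (fun i => w (i + m)%N).
Proof. by elim: j => [//|j IH] /=; rewrite IH. Qed.

Lemma phi_cat_le i m x (w o : nat -> U) :
  (i <= m)%N -> phi F i x (wcat m w o) = phi F i x w.
Proof.
move=> Him; apply: phi_ext => l Hl; rewrite /wcat.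
by rewrite (leq_trans Hl Him).
Qed.

Lemma phi_cat_ge j m x (w o : nat -> U) :
  phi F (j + m) x (wcat m w o) = phi F j (phi F m x w) o.
Proof.
rewrite phi_add phi_cat_le //; apply: phi_ext => l _.
by rewrite /wcat ltnNge leq_addl /= addnK.
Qed.

End PhiLemmas.

Section Dist.
Variable R : realType.
Variables (X : Type) (d : X -> X -> R) (Q : set X).
Hypothesis hd : is_metric d.
Hypothesis Qne : exists q, Q q.

Lemma d_ge0 x y : 0 <= d x y. Proof. by case: hd. Qed.
Lemma d_refl x : d x x = 0. Proof. by case: hd => _ H _ _; apply/H. Qed.
Lemma d_sym x y : d x y = d y x. Proof. by case: hd. Qed.
Lemma d_tri x y z : d x z <= d x y + d y z. Proof. by case: hd. Qed.


Lemma dist_hlb y : has_lbound [set d y q | q in Q].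
Proof. by exists 0 => z [q _ <-]; apply: d_ge0. Qed.

Lemma dist_ge0 y : 0 <= dist_set d y Q.
Proof.
apply: lb_le_inf; first by case: Qne => q Hq; exists (d y q), q.
by move=> z [q _ <-]; apply: d_ge0.
Qed.

Lemma dist_le y q : Q q -> dist_set d y Q <= d y q.
Proof. by move=> Hq; apply: (ge_inf (dist_hlb y)); exists q. Qed.

Lemma dist_lip a b : dist_set d a Q <= d a b + dist_set d b Q.
Proof.
rewrite -lerBlDl; apply: lb_le_inf; first by case: Qne => q Hq; exists (d b q), q.
move=> z [q Hq <-]; rewrite lerBlDl.
exact: le_trans (dist_le a Hq) (d_tri a b q).
Qed.

Lemma mball_open x r : mopen d (mball d x r).
Proof.
move=> y Hy; exists (r - d x y); first by rewrite subr_gt0.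
move=> z Hz; rewrite /mball /=.
apply: (le_lt_trans (d_tri x y z)).
by rewrite -ltrBrDl.
Qed.

End Dist.

Section Means.
Variable R : realType.
Variables (X U : Type) (d : X -> X -> R) (F : X -> U -> X) (Q : set X).

Definition Ssum (k : nat) (y : X) (w : nat -> U) : R :=
  \sum_(i < k) dist_set d (phi F i y w) Q.

Lemma meanE n y w : mean_dist d F Q n y w = (n%:R)^-1 * Ssum n y w.
Proof. by []. Qed.

Lemma mean_leP n y w (eta : R) : (0 < n)%N ->
  (mean_dist d F Q n y w <= eta) = (Ssum n y w <= n%:R * eta).
Proof. by move=> Hn; rewrite meanE ler_pdivrMl // ltr0n. Qed.

Lemma mean_ltP n y w (eta : R) : (0 < n)%N ->
  (mean_dist d F Q n y w < eta) = (Ssum n y w < n%:R * eta).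
Proof. by move=> Hn; rewrite meanE ltr_pdivrMl // ltr0n. Qed.

Lemma sum_le_const n (f : nat -> R) (eta : R) :
  (forall i, (i < n)%N -> f i <= eta) -> \sum_(i < n) f i <= n%:R * eta.
Proof.
move=> H; apply: (@le_trans _ _ (\sum_(i < n) eta)).
  by apply: ler_sum => i _; apply: H.
by rewrite sumr_const card_ord mulr_natl.
Qed.

Lemma mean_cat n m y (w o : nat -> U) (eta : R) : (0 < n)%N ->
  (forall i, (i < m)%N -> dist_set d (phi F i y w) Q <= eta) ->
  (forall k, (0 < k)%N -> mean_dist d F Q k (phi F m y w) o <= eta) ->
  mean_dist d F Q n y (wcat m w o) <= eta.
Proof.
move=> Hn H1 H2; rewrite mean_leP //.
case: (leqP n m) => Hnm.
  rewrite /Ssum; apply: (@sum_le_const _ (fun i => dist_set d (phi F i y (wcat m w o)) Q)) => i Hi; rewrite phi_cat_le; last by apply: ltnW; apply: leq_trans Hnm.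
  by apply: H1; apply: leq_trans Hnm.
have Hk : (0 < n - m)%N by rewrite subn_gt0.
rewrite /Ssum -(subnKC (ltnW Hnm)) big_split_ord /= natrD mulrDl.
apply: lerD.
  apply: (@sum_le_const _ (fun i => dist_set d (phi F i y (wcat m w o)) Q)) => i Hi; rewrite phi_cat_le; last exact: ltnW.
  exact: H1.
have := H2 _ Hk; rewrite mean_leP // /Ssum => H3.
apply: le_trans H3; apply: ler_sum => i _.
by rewrite addnC phi_cat_ge.
Qed.

End Means.

Lemma fin_del (R : realType) n (P : nat -> R -> Prop) :
  (forall i r r', 0 < r' -> r' <= r -> P i r -> P i r') ->
  (forall i, (i < n)%N -> exists2 r, 0 < r & P i r) ->
  exists2 r, 0 < r & forall i, (i < n)%N -> P i r.
Proof.
move=> Hm; elim: n => [|n IH] H; first by exists 1.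
have [r1 H1 H1'] := IH (fun i Hi => H i (ltnW Hi)).
have [r2 H2 H2'] := H n (ltnSn n).
exists (Order.min r1 r2); first by rewrite lt_min H1 H2.
move=> i; rewrite ltnS leq_eqVlt => /orP [/eqP ->|Hi].
  by apply: (Hm _ r2) => //; [rewrite lt_min H1 H2|rewrite ge_min lexx orbT].
by apply: (Hm _ r1) => //; [rewrite lt_min H1 H2|rewrite ge_min lexx| apply: H1'].
Qed.

Lemma fin_nbhd (R : realType) n (P : nat -> nat -> R -> Prop) :
  (forall i T T' r r', (T <= T')%N -> 0 < r' -> r' <= r -> P i T r -> P i T' r') ->
  (forall i, (i < n)%N -> exists T, exists2 r, 0 < r & P i T r) ->
  exists T, exists2 r, 0 < r & forall i, (i < n)%N -> P i T r.
Proof.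
move=> Hm; elim: n => [|n IH] H; first by exists 0%N, 1.
have [T1 [r1 H1 H1']] := IH (fun i Hi => H i (ltnW Hi)).
have [T2 [r2 H2 H2']] := H n (ltnSn n).
exists (maxn T1 T2), (Order.min r1 r2); first by rewrite lt_min H1 H2.
move=> i; rewrite ltnS leq_eqVlt => /orP [/eqP ->|Hi].
  apply: (Hm _ T2 _ r2) => //; [exact: leq_maxr|by rewrite lt_min H1 H2|by rewrite ge_min lexx orbT].
apply: (Hm _ T1 _ r1) => //; [exact: leq_maxl|by rewrite lt_min H1 H2|by rewrite ge_min lexx| by apply: H1'].
Qed.

Lemma kfrac (R : realType) (k : nat) (e : R) : 0 <= e ->
  k%:R * (e / (k.+1)%:R) <= e.
Proof.
move=> He; rewrite mulrA ler_pdivrMr ?ltr0n // [_ * e]mulrC.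
by rewrite ler_wpM2l // ler_nat.
Qed.

Section Cont.
Variable R : realType.
Variables (X U : Type) (d : X -> X -> R) (dU : U -> U -> R) (F : X -> U -> X) (Q : set X).
Hypothesis hd : is_metric d.
Hypothesis hdU : is_metric dU.
Hypothesis hphi : phi_continuous d dU F.
Hypothesis Qne : exists q, Q q.

Lemma phi_cont_x k x w (e : R) : 0 < e ->
  exists2 del, 0 < del & forall y, d x y < del -> d (phi F k x w) (phi F k y w) < e.
Proof.
move=> He; have [del [N [eta [Hdel Heta H]]]] := hphi k x w He.
exists del => // y Hy; apply: H => // i _; by rewrite (d_refl hdU).
Qed.

Lemma phi_cont_w k x w (e : R) : 0 < e ->
  exists T, exists2 eta, 0 < eta & forall w',
    (forall i, (i < T)%N -> dU (w i) (w' i) < eta) -> d (phi F k x w) (phi F k x w') < e.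
Proof.
move=> He; have [del [N [eta [Hdel Heta H]]]] := hphi k x w He.
exists N, eta => // w' Hw'; apply: H => //; by rewrite (d_refl hd).
Qed.

Lemma S_cont_x k x w (e : R) : 0 < e ->
  exists2 del, 0 < del & forall y, d x y < del ->
    Ssum d F Q k x w <= Ssum d F Q k y w + e.
Proof.
move=> He.
have Hg : 0 < e / (k.+1)%:R by rewrite divr_gt0 // ltr0n.
have [del Hdel H] := @fin_del R k (fun i r => forall y, d x y < r ->
   d (phi F i x w) (phi F i y w) < e / (k.+1)%:R)
  (fun i r r' _ Hr H y Hy => H y (lt_le_trans Hy Hr))
  (fun i _ => phi_cont_x i x w Hg).
exists del => // y Hy.
apply: (@le_trans _ _ (\sum_(i < k) (d (phi F i x w) (phi F i y w) + dist_set d (phi F i y w) Q))).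
  by apply: ler_sum => i _; apply: dist_lip.
rewrite big_split /= addrC lerD2l.
apply: le_trans (kfrac k (ltW He)).
by apply: (@sum_le_const R k (fun i => d (phi F i x w) (phi F i y w))) => i Hi; apply: ltW; apply: H.
Qed.

Lemma S_cont_w k x w (e : R) : 0 < e ->
  exists T, exists2 eta, 0 < eta & forall w',
    (forall i, (i < T)%N -> dU (w i) (w' i) < eta) ->
    Ssum d F Q k x w <= Ssum d F Q k x w' + e.
Proof.
move=> He.
have Hg : 0 < e / (k.+1)%:R by rewrite divr_gt0 // ltr0n.
have [T [eta Heta H]] := @fin_nbhd R k (fun i T r => forall w',
    (forall j, (j < T)%N -> dU (w j) (w' j) < r) ->
   d (phi F i x w) (phi F i x w') < e / (k.+1)%:R)
  (fun i T T' r r' HT _ Hr H w' Hw' => H w' (fun j Hj => lt_le_trans (Hw' j (leq_trans Hj HT)) Hr))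
  (fun i _ => phi_cont_w i x w Hg).
exists T, eta => // w' Hw'.
apply: (@le_trans _ _ (\sum_(i < k) (d (phi F i x w) (phi F i x w') + dist_set d (phi F i x w') Q))).
  by apply: ler_sum => i _; apply: dist_lip.
rewrite big_split /= addrC lerD2l.
apply: le_trans (kfrac k (ltW He)).
by apply: (@sum_le_const R k (fun i => d (phi F i x w) (phi F i x w'))) => i Hi; apply: ltW; apply: H.
Qed.

End Cont.

Section CSet.
Variable R : realType.
Variables (X U : Type) (d : X -> X -> R) (dU : U -> U -> R) (F : X -> U -> X).
Hypothesis hd : is_metric d.
Hypothesis hdU : is_metric dU.
Hypothesis hphi : phi_continuous d dU F.

Lemma orbit_phi p a i w : orbit_plus F p a -> orbit_plus F p (phi F i a w).
Proof.
case=> m [v ->]; exists (i + m)%N, (wcat m v w).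
by rewrite phi_cat_ge.
Qed.

Lemma closure_mono (A B : set X) : A `<=` B -> mclosure d A `<=` mclosure d B.
Proof.
move=> AB y Hy e He; have [a Ha Hd] := Hy e He; exists a => //; exact: AB.
Qed.

Lemma closure_orbit_trans p z : orbit_plus F p z ->
  mclosure d (orbit_plus F z) `<=` mclosure d (orbit_plus F p).
Proof.
move=> Hz; apply: closure_mono => y [m [w ->]]; exact: orbit_phi.
Qed.

Lemma closure_phi p x i w : mclosure d (orbit_plus F p) x ->
  mclosure d (orbit_plus F p) (phi F i x w).
Proof.
move=> Hx e He.
have [del Hdel H] := phi_cont_x hdU hphi i x w He.
have [a Ha Hxa] := Hx del Hdel.
exists (phi F i a w); [exact: orbit_phi | exact: H].
Qed.

Lemma path_in (Q : set X) x m w : control_set d F Q -> Q x -> Q (phi F m x w) ->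
  forall i, (i <= m)%N -> Q (phi F i x w).
Proof.
move=> [[HQ1 HQ2] HQmax] Qx Qm.
pose D' := fun z => Q z \/ exists i, (i <= m)%N /\ z = phi F i x w.
have HQc : forall z, Q z -> D' `<=` mclosure d (orbit_plus F z).
  move=> z Qz y [Qy|[i [Hi ->]]]; first exact: HQ2.
  by apply: closure_phi; apply: HQ2.
have cond : control_set_cond d F D'.
  split.
    move=> z [Qz|[i [Hi ->]]].
      have [w' Hw'] := HQ1 z Qz; exists w' => k; left; exact: Hw'.
    have [ws Hws] := HQ1 _ Qm.
    exists (wcat (m - i) (fun l => w (l + i)%N) ws) => k.
    case: (leqP k (m - i)) => Hk.
      rewrite phi_cat_le // -phi_add; right; exists (k + i)%N; split => //.
      by rewrite -(subnK Hi) leq_add2r.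
    rewrite -(subnK (ltnW Hk)) phi_cat_ge -phi_add subnK //; left; exact: Hws.
  move=> z [Qz|[i [Hi ->]]]; first exact: HQc.
  move=> y Hy; apply: (@closure_orbit_trans _ (phi F m x w)).
    exists (m - i)%N, (fun l => w (l + i)%N); by rewrite -phi_add subnK.
  exact: HQc.
have E := HQmax D' cond (fun z Hz => or_introl Hz).
move=> i Hi; rewrite -E; right; by exists i.
Qed.

End CSet.

Section Ball.
Variable R : realType.
Variables (X : Type) (d : X -> X -> R).
Hypothesis hd : is_metric d.

Lemma ball_cover (A : nat -> set X) N : 
  (forall i y, (forall s, 0 < s -> exists2 a, A i a & d y a < s) -> A i y) ->
  forall c r, 0 < r ->
  mball d c r `<=` (fun y => exists i, (i < N)%N /\ A i y) ->
  exists i, (i < N)%N /\ exists c', exists2 r', 0 < r' &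
    mball d c' r' `<=` mball d c r `&` A i.
Proof.
move=> Hcl; elim: N => [|N IH] c r Hr Hcov.
  have [i [Hi _]] := Hcov c (ltac:(by rewrite /mball /= (d_refl hd))).
  by [].
have [[c' [r' Hr' [Hsub Hno]]]|Hn] := pselect (exists c', exists2 r', 0 < r' &
   (mball d c' r' `<=` mball d c r /\ forall y, mball d c' r' y -> ~ A N y)).
  have [|i [Hi [c'' [r'' Hr'' Hsub']]]] := IH c' r' Hr'.
    move=> y Hy; have [i [Hi HA]] := Hcov y (Hsub y Hy).
    exists i; split => //; move: Hi; rewrite ltnS leq_eqVlt => /orP [/eqP Ei|//].
    by exfalso; apply: (Hno y Hy); rewrite -Ei.
  exists i; split; first exact: leqW.
  exists c'', r'' => // z Hz; have [Hz1 Hz2] := Hsub' z Hz; split => //; exact: Hsub.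
exists N; split => //; exists c, (r / 2); first by rewrite divr_gt0.
move=> y Hy; rewrite /mball /= in Hy; split.
  by rewrite /mball /=; apply: lt_trans Hy _; rewrite ltr_pdivrMr // ltr_pMr // ltr1n //.
apply: (Hcl N y) => s Hs.
pose s' := Order.min s (r / 2).
have Hs' : 0 < s' by rewrite lt_min Hs divr_gt0.
have [[a Ha Hda]|Hn'] := pselect (exists2 a, A N a & d y a < s').
  exists a => //; apply: (lt_le_trans Hda); by rewrite ge_min lexx.
exfalso; apply: Hn; exists y, s' => //; split.
  move=> z Hz; rewrite /mball /=; apply: le_lt_trans (d_tri hd c y z) _.
  rewrite (splitr r); apply: ltrD => //; apply: (lt_le_trans Hz); by rewrite ge_min lexx orbT.
move=> z Hz HA; apply: Hn'; by exists z.
Qed.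

End Ball.

Definition infn (P : nat -> Prop) := forall M, exists n, (M <= n)%N /\ P n.

Fixpoint seqpick (pick : nat -> nat -> nat) (k : nat) : nat :=
  match k with 0 => pick 0%N 0%N | k'.+1 => pick (seqpick pick k').+1 k'.+1 end.

Fixpoint chainf (T : Type) (step : (nat -> Prop) * nat -> T * (nat -> Prop)) (j : nat)
  : nat -> Prop :=
  match j with 0 => (fun _ => True) | j'.+1 => (step (chainf step j', j')).2 end.

Lemma archi_inv (R : realType) (eta : R) : 0 < eta -> exists K : nat, ((K.+1)%:R)^-1 < eta.
Proof.
move=> He; exists (Num.Def.archi_bound eta^-1).
rewrite -[X in _ < X]invrK ltf_pV2 ?posrE ?invr_gt0 ?ltr0n //.
have Hi : 0 <= eta^-1 by rewrite invr_ge0 ltW.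
apply: lt_trans (archi_boundP Hi) _.
by rewrite ltr_nat.
Qed.

Lemma seqpick_ge pick : (forall M k, (M <= pick M k)%N) -> forall k, (k <= seqpick pick k)%N.
Proof.
move=> H; elim=> [|k IH] //=.
by apply: leq_trans (H _ _); rewrite ltnS.
Qed.

Lemma seqpick_mono pick : (forall M k, (M <= pick M k)%N) ->
  forall k l, (k < l)%N -> (seqpick pick k < seqpick pick l)%N.
Proof.
move=> H k; elim=> [//|l IH] Hkl /=.
move: Hkl; rewrite ltnS leq_eqVlt => /orP [/eqP ->|Hkl].
  exact: H.
apply: leq_trans (IH Hkl) _; apply: leq_trans (H _ _); by [].
Qed.

Lemma max_foldr (T : Type) (M : T -> nat) (s : seq T) p :
  Stdlib.Lists.List.In p s -> (M p <= foldr (fun q acc => maxn (M q) acc) 0%N s)%N.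
Proof.
elim: s => [//|q s IH] /= [->|Hp]; first exact: leq_maxl.
apply: leq_trans (IH Hp) _; exact: leq_maxr.
Qed.

Section Compact.
Variable R : realType.
Variables (U : Type) (dU : U -> U -> R).
Hypothesis hdU : is_metric dU.
Hypothesis hcU : mcompact dU setT.

Lemma cluster (u : nat -> U) (P : nat -> Prop) : infn P ->
  exists p, forall eta, 0 < eta -> infn (fun n => P n /\ dU p (u n) < eta).
Proof.
move=> HP.
have [//|Hno] := pselect (exists p, forall eta, 0 < eta -> infn (fun n => P n /\ dU p (u n) < eta)).
have H : forall p, exists eM : R * nat, 0 < eM.1 /\
    forall n, (eM.2 <= n)%N -> P n -> eM.1 <= dU p (u n).
  move=> p.
  have [//|Hn] := pselect (exists eM : R * nat, 0 < eM.1 /\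
    forall n, (eM.2 <= n)%N -> P n -> eM.1 <= dU p (u n)).
  exfalso; apply: Hno; exists p => eta He M.
  have [//|Hn2] := pselect (exists n, (M <= n)%N /\ P n /\ dU p (u n) < eta).
  exfalso; apply: Hn; exists (eta, M); split => // n Hn Pn /=.
  rewrite leNgt; apply/negP => Hlt; apply: Hn2; by exists n.
have [eM HeM] := choice H.
pose V := fun p => mball dU p (eM p).1.
have [s Hs] := hcU (I:=U) (V:=V) (fun p => mball_open hdU (x:=p) (r:=(eM p).1)) (fun p _ =>
   ltac:(exists p => //; rewrite /V /mball /= (d_refl hdU); exact: (HeM p).1)).
pose Mm := foldr (fun q acc => maxn (eM q).2 acc) 0%N s.
have [n [Hn Pn]] := HP Mm.
have [q Hq Hqn] := Hs (u n) I.
have := (HeM q).2 n (leq_trans (max_foldr (fun q => (eM q).2) Hq) Hn) Pn.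
by rewrite leNgt Hqn.
Qed.

Lemma cluster_sub (u : nat -> U) (P : nat -> Prop) p :
  (forall eta, 0 < eta -> infn (fun n => P n /\ dU p (u n) < eta)) ->
  exists P' : nat -> Prop, [/\ forall n, P' n -> P n, infn P' &
    forall eta, 0 < eta -> exists M, forall n, (M <= n)%N -> P' n -> dU p (u n) < eta].
Proof.
move=> Hc.
have H : forall Mk : nat * nat, exists n, (Mk.1 <= n)%N /\ P n /\ dU p (u n) < ((Mk.2.+1)%:R)^-1.
  move=> [M k]; have [n [Hn [Pn Hd]]] := Hc ((k.+1)%:R)^-1 (ltac:(by rewrite invr_gt0 ltr0n)) M.
  by exists n.
have [pk Hpk] := choice H.
pose pick := fun M k => pk (M, k).
have Hge : forall M k, (M <= pick M k)%N by move=> M k; exact: (Hpk (M, k)).1.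
exists (fun n => exists k, n = seqpick pick k); split.
- move=> n [[|k] ->] /=; [exact: (Hpk (0, 0)%N).2.1 | exact: (Hpk _).2.1].
- by move=> M; exists (seqpick pick M); split; [exact: seqpick_ge|exists M].
move=> eta He; have [K HK] := archi_inv He.
exists (seqpick pick K) => n Hn [k Ek].
have HKk : (K <= k)%N.
  rewrite leqNgt; apply/negP => Hkk.
  have := seqpick_mono Hge Hkk; by rewrite -Ek ltnNge Hn.
have Hd : dU p (u n) < ((k.+1)%:R)^-1.
  rewrite Ek; case: k Ek HKk => [|k] Ek HKk /=; [exact: (Hpk (0, 0)%N).2.2 | exact: (Hpk _).2.2].
apply: lt_le_trans Hd _; apply: le_trans (ltW HK).
by rewrite lef_pV2 ?posrE ?ltr0n // ler_nat.
Qed.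

Lemma diag (u0 : U) (h : nat -> nat -> U) :
  exists G : nat -> U, forall J eta M, 0 < eta ->
    exists n, (M <= n)%N /\ forall j, (j < J)%N -> dU (G j) (h n j) < eta.
Proof.
have H : forall Pj : (nat -> Prop) * nat, exists r : U * (nat -> Prop),
   infn Pj.1 -> [/\ forall n, r.2 n -> Pj.1 n, infn r.2 &
    forall eta, 0 < eta -> exists M, forall n, (M <= n)%N -> r.2 n -> dU r.1 (h n Pj.2) < eta].
  move=> [P j]; have [HP|HnP] := pselect (infn P).
    have [p Hp] := cluster (fun n => h n j) HP.
    have [P' HP'] := cluster_sub Hp.
    by exists (p, P').
  by exists (u0, P).
have [step Hstep] := choice H.
pose ch := chainf step.
have Hinf : forall j, infn (ch j).
  elim=> [|j IH]; first by move=> M; exists M.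
  by have [] := Hstep (ch j, j) IH.
have Hsub : forall j J, (j < J)%N -> forall n, ch J n -> ch j.+1 n.
  move=> j; elim=> [//|J IH]; rewrite ltnS leq_eqVlt => /orP [/eqP ->//|HjJ] n HJ.
  apply: IH => //; by have [H1 _ _] := Hstep (ch J, J) (Hinf J); apply: H1.
exists (fun j => (step (ch j, j)).1) => J eta M He.
have HM : exists M', forall j, (j < J)%N -> forall n, (M' <= n)%N -> ch j.+1 n ->
    dU (step (ch j, j)).1 (h n j) < eta.
  elim: J => [|J [M' HM']]; first by exists 0%N.
  have [_ _ H3] := Hstep (ch J, J) (Hinf J).
  have [MJ HMJ] := H3 eta He.
  exists (maxn M' MJ) => j; rewrite ltnS leq_eqVlt => /orP [/eqP ->|Hj] n Hn Hch.
    by apply: HMJ => //; apply: leq_trans Hn; exact: leq_maxr.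
  by apply: HM' => //; apply: leq_trans Hn; exact: leq_maxl.
have [M' HM'] := HM.
have [n [Hn Hchn]] := Hinf J (maxn M M').
exists n; split; first by apply: leq_trans Hn; exact: leq_maxl.
move=> j Hj; apply: HM' => //; first by apply: leq_trans Hn; exact: leq_maxr.
exact: Hsub Hchn.
Qed.

End Compact.

Lemma size_length (T : Type) (s : seq T) : size s = length s.
Proof. by elim: s => //= a s ->. Qed.

Lemma le_range k T T' : (1 <= k <= T)%N -> (T <= T')%N -> (1 <= k <= T')%N.
Proof. by case/andP=> -> /= H1 H2; apply: leq_trans H1 H2. Qed.

Section Limit.
Variable R : realType.
Variables (X U : Type) (d : X -> X -> R) (dU : U -> U -> R) (F : X -> U -> X) (Q : set X).
Hypothesis hd : is_metric d.
Hypothesis hdU : is_metric dU.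
Hypothesis hcU : mcompact dU setT.
Hypothesis hphi : phi_continuous d dU F.
Hypothesis Qne : exists q, Q q.

Lemma mean_geP n y w (eta : R) : (0 < n)%N ->
  (eta <= mean_dist d F Q n y w) = (n%:R * eta <= Ssum d F Q n y w).
Proof. by move=> Hn; rewrite meanE ler_pdivlMl // ltr0n. Qed.

Lemma spanning_lists (w0 : nat -> U) (eps : R) :
  bounded_inv_complexity_mean d F Q -> 0 < eps ->
  exists K : nat, exists g : nat -> nat -> (nat -> U), forall n x, Q x ->
    exists i, (i < K)%N /\ forall k, (1 <= k <= n.+1)%N -> mean_dist d F Q k x (g n i) < eps.
Proof.
move=> Hb He; have [C HC] := Hb eps He.
pose K := Num.Def.archi_bound `|C + 1|.
have HK : C + 1 < K%:R.
  apply: le_lt_trans (ler_norm _) _; exact: archi_boundP.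
have H : forall n : nat, exists Fs : seq (nat -> U),
    spanning_mean d F n.+1 eps Q Fs /\ (size Fs < K)%N.
  move=> n; have := HC n.+1 isT => Hr.
  have : (r_inv_mean d F n.+1 eps Q < (C + 1)%:E)%E.
    by apply: le_lt_trans Hr _; rewrite lte_fin ltrDl.
  move/ereal_inf_lt => [y [Fs HFs <-]]; rewrite lte_fin => Hlt.
  exists Fs; split => //; rewrite -(ltr_nat R); exact: lt_trans Hlt HK.
have [Fsq HFsq] := choice H.
exists K, (fun n i => Stdlib.Lists.List.nth i (Fsq n) w0) => n x Qx.
have [Hsp Hsz] := HFsq n.
move: Qx; rewrite {1}Hsp => -[w Hin [_ Hw]].
have [i [Hi Ei]] := Stdlib.Lists.List.In_nth (Fsq n) w w0 Hin.
exists i; split; first by move/ssrnat.ltP: Hi; rewrite -size_length => Hi; exact: ltn_trans Hi Hsz.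
by rewrite /= Ei.
Qed.

Lemma limit_controls (u0 : U) (w0 : nat -> U) (eps : R) :
  bounded_inv_complexity_mean d F Q -> 0 < eps ->
  exists K : nat, exists Gc : nat -> nat -> U, forall x, Q x ->
    exists i, (i < K)%N /\ forall k, (0 < k)%N -> mean_dist d F Q k x (Gc i) <= eps.
Proof.
move=> Hb He; have [K [g Hg]] := spanning_lists w0 Hb He.
pose h := fun n j => g n (j %% K)%N (j %/ K)%N.
have [G HG] := diag hdU hcU u0 h.
exists K, (fun i t => G (t * K + i)%N) => x Qx.
have HK : (0 < K)%N by have [i [Hi _]] := Hg 0%N x Qx; exact: leq_ltn_trans (leq0n i) Hi.
have [//|Hno] := pselect (exists i, (i < K)%N /\ forall k, (0 < k)%N ->
   mean_dist d F Q k x (fun t => G (t * K + i)%N) <= eps).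
exfalso.
pose Gc := fun i t => G (t * K + i)%N.
have Hbad : forall i, (i < K)%N -> exists T, exists2 r, 0 < r &
    forall w', (forall t, (t < T)%N -> dU (Gc i t) (w' t) < r) ->
      exists k, (1 <= k <= T)%N /\ eps <= mean_dist d F Q k x w'.
  move=> i Hi.
  have [k [Hk Hm]] : exists k, (0 < k)%N /\ eps < mean_dist d F Q k x (Gc i).
    apply: contrapT => Hn; apply: Hno; exists i; split => // k Hk.
    rewrite leNgt; apply/negP => Hlt; apply: Hn; by exists k.
  have HD : 0 < k%:R * (mean_dist d F Q k x (Gc i) - eps) by rewrite mulr_gt0 ?ltr0n ?subr_gt0.
  have [T0 [r Hr HT]] := S_cont_w hd hphi Qne k x (Gc i) HD.
  exists (maxn T0 k), r => // w' Hw'.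
  exists k; split; first by rewrite Hk leq_maxr.
  rewrite mean_geP //.
  have := HT w' (fun t Ht => Hw' t (leq_trans Ht (leq_maxl _ _))).
  rewrite meanE mulrBr mulrA mulfV ?pnatr_eq0 -?lt0n // mul1r.
  by rewrite -lerBlDr opprB addrCA subrr addr0.
have [T [r Hr Hall]] := @fin_nbhd R K (fun i T r => forall w',
    (forall t, (t < T)%N -> dU (Gc i t) (w' t) < r) ->
      exists k, (1 <= k <= T)%N /\ eps <= mean_dist d F Q k x w')
  (fun i T T' r r' HT _ Hrr H w' Hw' =>
     match H w' (fun t Ht => lt_le_trans (Hw' t (leq_trans Ht HT)) Hrr) with
     | ex_intro k (conj Hk Hm) => ex_intro _ k (conj (le_range Hk HT) Hm)
     end) Hbad.
have [n [Hn Hcl]] := HG (T * K)%N r T Hr.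
have [i [Hi Hgi]] := Hg n x Qx.
have Hnear : forall t, (t < T)%N -> dU (Gc i t) (g n i t) < r.
  move=> t Ht; have Hj : (t * K + i < T * K)%N by nia.
  have := Hcl _ Hj; rewrite /h modnMDl (modn_small Hi) divnMDl // (divn_small Hi) addn0.
  by [].
have [k [Hk Hm]] := Hall i Hi (g n i) Hnear.
have : mean_dist d F Q k x (g n i) < eps.
  apply: Hgi; case/andP: Hk => -> /= HkT; apply: leq_trans HkT _; exact: leq_trans Hn (leqnSn n).
by rewrite ltNge Hm.
Qed.

End Limit.

Section Final.
Variable R : realType.
Variables (X U : Type) (d : X -> X -> R) (dU : U -> U -> R) (F : X -> U -> X) (Q : set X).
Hypothesis hd : is_metric d.
Hypothesis hdU : is_metric dU.
Hypothesis hcU : mcompact dU setT.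
Hypothesis hphi : phi_continuous d dU F.

Lemma good_closed (Qne : exists q, Q q) (eps : R) (om : nat -> U) y :
  (forall s, 0 < s -> exists2 a,
     (forall k, (0 < k)%N -> mean_dist d F Q k a om <= eps) & d y a < s) ->
  forall k, (0 < k)%N -> mean_dist d F Q k y om <= eps.
Proof.
move=> Hy k Hk; rewrite mean_leP //; apply/ler_addgt0Pr => e He.
have [del Hdel H] := S_cont_x hd hdU hphi Qne k y om He.
have [a Ha Hya] := Hy del Hdel.
apply: le_trans (H a Hya) _; rewrite lerD2r -mean_leP //; exact: Ha.
Qed.

Lemma eq_to_fin : equi_invariant_mean d F Q -> finitely_equi_invariant_mean d F Q.
Proof.
move=> Heq x Qx; have [Qx' H] := Heq x Qx; split => // e He.
have [del [w [Hdel H']]] := H e He.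
exists del, [:: w]; split => // y Hy Qy; exists w; [by left | exact: H'].
Qed.

Lemma fin_to_bounded : mcompact d Q ->
  finitely_equi_invariant_mean d F Q -> bounded_inv_complexity_mean d F Q.
Proof.
move=> hQc Hfin e He.
have H : forall i : {x : X | Q x}, exists p : R * seq (nat -> U), 0 < p.1 /\
    forall y, mball d (proj1_sig i) p.1 y -> Q y ->
      exists2 w, Stdlib.Lists.List.In w p.2 & forall n, (0 < n)%N -> mean_dist d F Q n y w < e.
  move=> [x Qx] /=; have [_ H] := Hfin x Qx.
  have [del [Fs [Hdel H']]] := H e He; by exists (del, Fs).
have [p Hp] := choice H.
pose V := fun i : {x : X | Q x} => mball d (proj1_sig i) (p i).1.
have [s Hs] := hQc _ V (fun i => mball_open hd (x:=proj1_sig i) (r:=(p i).1))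
   (fun y Qy => ltac:(exists (exist _ y Qy) => //; rewrite /V /mball /= (d_refl hd); exact: (Hp _).1)).
pose Fs := Stdlib.Lists.List.flat_map (fun i => (p i).2) s.
exists (size Fs)%:R => n Hn.
apply: ge_ereal_inf; exists ((size Fs)%:R)%:E => //; exists Fs => //.
apply/seteqP; split => y.
  move=> Qy; have [i Hin Hv] := Hs y Qy.
  have [w Hw Hm] := (Hp i).2 y Hv Qy.
  exists w.
    apply/Stdlib.Lists.List.in_flat_map; by exists i.
  split => // k /andP [Hk _]; exact: Hm.
by move=> [w _ [Qy _]].
Qed.

Lemma bounded_to_eq : control_set d F Q -> nonempty_interior d Q ->
  bounded_inv_complexity_mean d F Q -> equi_invariant_mean d F Q.
Proof.
move=> hQ [c0 [r0 Hr0 Hball]] Hb.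
have Qc0 : Q c0 by apply: Hball; rewrite /mball /= (d_refl hd).
have Qne : exists q, Q q by exists c0.
have [w0 _] := hQ.1.1 c0 Qc0.
move=> x Qx; split => // e He.
have He2 : 0 < e / 2 by rewrite divr_gt0.
have [K [Gc HGc]] := limit_controls hd hdU hcU hphi Qne (w0 0%N) w0 Hb He2.
pose A := fun i a => forall k, (0 < k)%N -> mean_dist d F Q k a (Gc i) <= e / 2.
have [i0 [Hi0 [c [r Hr Hsub]]]] := @ball_cover R X d hd A K
  (fun i y Hy => good_closed Qne Hy) c0 r0 Hr0
  (fun y Hy => HGc y (Hball y Hy)).
have HcQ : mball d c r `<=` Q by move=> z Hz; apply: Hball; exact: (Hsub z Hz).1.
have HcA : mball d c r `<=` A i0 by move=> z Hz; exact: (Hsub z Hz).2.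
have Qc : Q c by apply: HcQ; rewrite /mball /= (d_refl hd).
have Hr2 : 0 < r / 2 by rewrite divr_gt0.
have [a [m [w Ea]] Hca] := hQ.1.2 x Qx c Qc (r / 2) Hr2.
have Hr2r : r / 2 < r by rewrite ltr_pdivrMr // ltr_pMr // ltr1n.
have Qa : Q (phi F m x w) by rewrite -Ea; apply: HcQ; exact: lt_trans Hca Hr2r.
have Hpath := path_in hdU hphi hQ Qx Qa.
pose g := Order.min (r / 2) (e / 2).
have Hg : 0 < g by rewrite lt_min Hr2 He2.
have [del Hdel Hdl] := @fin_del R m.+1 (fun l del => forall y, d x y < del ->
   d (phi F l x w) (phi F l y w) < g)
  (fun l r r' _ Hr H y Hy => H y (lt_le_trans Hy Hr))
  (fun l _ => phi_cont_x hdU hphi l x w Hg).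
exists del, (wcat m w (Gc i0)); split => // y Hy _ n Hn.
apply: (@le_lt_trans _ _ (e / 2)); last by rewrite ltr_pdivrMr // ltr_pMr // ltr1n.
apply: mean_cat => //.
  move=> l Hl; apply: le_trans (dist_le hd _ (Hpath l (ltnW Hl))) _.
  rewrite (d_sym hd); apply: ltW; apply: lt_le_trans (Hdl l (ltnW Hl) y Hy) _.
  by rewrite ge_min lexx orbT.
apply: HcA; rewrite /mball /=.
apply: le_lt_trans (d_tri hd c (phi F m x w) _) _.
rewrite (splitr r); apply: ltrD; first by rewrite -Ea.
apply: lt_le_trans (Hdl m (ltnSn m) y Hy) _; by rewrite ge_min lexx.
Qed.

End Final.

Theorem mainTheorem6 (R : realType) (X U : Type)
  (d : X -> X -> R) (dU : U -> U -> R) (F : X -> U -> X) (Q : set X) :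
  is_metric d -> is_metric dU -> mcompact dU setT ->
  (forall u : U, mcontinuous d d (fun x => F x u)) ->
  phi_continuous d dU F ->
  mcompact d Q -> control_set d F Q -> nonempty_interior d Q ->
  (equi_invariant_mean d F Q <-> finitely_equi_invariant_mean d F Q) /\
  (finitely_equi_invariant_mean d F Q <-> bounded_inv_complexity_mean d F Q).
Proof.
move=> hd hdU hcU _ hphi hQc hQ hint; split; split.
- exact: eq_to_fin.
- move=> H; apply: (bounded_to_eq hd hdU hcU hphi hQ hint); exact: fin_to_bounded.
- exact: fin_to_bounded.
- move=> H; apply: eq_to_fin; exact: (bounded_to_eq hd hdU hcU hphi hQ hint).
Qed.
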